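(* Let $r,q\in\mathbb N$ and let $M=(a_{ik})_{i,k=0}^\infty$ be an infinite complex matrix with $a_{ik}=0$ whenever $k>i+r$ or $i>k+q$, $a_{i,i+r}=1$ and $a_{i+q,i}\neq 0$ for all $i\ge 0$. For $k\ge 0$, $m=1,\dots,r$, $n=1,\dots,q$ put $S^{m,n}_k=(M^k)_{m-1,n-1}$ (entries of the $k$-th matrix power; $M^0$ is the identity). Define the infinite matrix $(\alpha_{i,j})_{i,j\ge 0}$ by $\alpha_{i,j}=S^{m_1,n_1}_{k_1+k_2}$ with $k_1=\lfloor i/r\rfloor$, $k_2=\lfloor j/q\rfloor$, $m_1=\operatorname{rem}(i,r)+1$, $n_1=\operatorname{rem}(j,q)+1$, and let $\Delta_k=\det(\alpha_{i,j})_{i,j=0}^{k}$ for $k\ge 0$, $\Delta_{-1}=1$. Then $\Delta_0=\Delta_1=\dots=\Delta_{q-1}=1$ and, for every $i\ge 0$, $$\Delta_{i+q}=\prod_{j=0}^{i} a_{j+q,\,j}^{\;\lfloor (i-j)/q\rfloor+1},$$ i.e. $\Delta_{i+q}=(a_{i+q,i}\cdots a_{i+1,i-q+1})(a_{i,i-q}\cdots a_{i-q+1,i-2q+1})^2\cdots(\cdots a_{q,0})^{h}$ with $h=\lfloor (i+q)/q\rfloor$, where factors $a_{j+q,j}$ with $j<0$ are interpreted as $1$.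
   Context: $\operatorname{rem}(a,b)$ denotes the remainder of $a$ upon division by $b$. The product formula is an equivalent rewriting of the paper's grouped formula: the $q$ consecutive factors $a_{j+q,j}$ with $j=i,\dots,i-q+1$ appear to power 1, the next $q$ to power 2, etc., up to $a_{q,0}$ appearing to power $h$. *)

(* Defs.v *)
From HB Require Import structures.
From mathcomp Require Import all_boot all_order all_algebra.
From mathcomp Require Import complex.
Set Implicit Arguments. Unset Strict Implicit. Unset Printing Implicit Defensive.
Import Order.TTheory GRing.Theory Num.Theory.
Local Open Scope ring_scope.

(* Entry (m, n) (0-indexed) of the k-th power of the banded infinite matrix M,
   computed through the top-left square block of size (k.+1 * r + q).+1.
   When M satisfies the band condition a_{ik} = 0 for k > i + r, every path
   of length k in the (row-finite) product starting at a row m < r only visits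
   indices < k.+1 * r, so this truncation equals the genuine infinite product
   entry (M^k)_{m,n} for all m < r and n < q (the only entries used). *)
Definition Spow (C : pzRingType) (r q : nat) (M : nat -> nat -> C)
    (k m n : nat) : C :=
  let N := (k.+1 * r + q)%N in
  ((\matrix_(i < N.+1, j < N.+1) M i j) ^+ k) (inord m) (inord n).

Definition S (C : pzRingType) (r q : nat) (M : nat -> nat -> C)
    (k m n : nat) : C := Spow r q M k m.-1 n.-1.

Definition alpha (C : pzRingType) (r q : nat) (M : nat -> nat -> C)
    (i j : nat) : C :=
  S r q M (i %/ r + j %/ q) (i %% r).+1 (j %% q).+1.

Definition Delta (C : comPzRingType) (r q : nat) (M : nat -> nat -> C)
    (k : nat) : C :=
  \det (\matrix_(i < k.+1, j < k.+1) alpha r q M i j).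

(* Main.v *)
Require Import Defs.
From HB Require Import structures.
From mathcomp Require Import all_boot all_order all_algebra.
From mathcomp Require Import complex.
From mathcomp Require Import zify.
Set Implicit Arguments. Unset Strict Implicit. Unset Printing Implicit Defensive.
Import Order.TTheory GRing.Theory Num.Theory.
Local Open Scope ring_scope.

Section Comb.
Variable C : comNzRingType.
Variable q : nat.
Hypothesis hq : (0 < q)%N.
Variable f : nat -> C.

Definition dd (j : nat) : C := \prod_(t < j %/ q) f (j %% q + t * q)%N.
Definition DD (K : nat) : C := \prod_(j < K.+1) dd j.
Definition hh (p : nat) : C := \prod_(j < p.+1) f j ^+ (q %| p - j).
Definition GG (i : nat) : C := \prod_(j < i.+1) f j ^+ ((i - j) %/ q).+1.

Lemma dd_small j : (j < q)%N -> dd j = 1.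
Proof. by move=> H; rewrite /dd divn_small // big_ord0. Qed.

Lemma dd_rec p : dd (p + q) = dd p * f p.
Proof.
rewrite /dd divnDr ?dvdnn // divnn hq addn1 big_ord_recr /= modnDr.
by rewrite [X in f X](addnC) -divn_eq.
Qed.

Lemma hh_small p : (p < q)%N -> hh p = f p.
Proof.
move=> Hp; rewrite /hh big_ord_recr /= subnn dvdn0 expr1 big1 ?mul1r // => j _.
have -> : (q %| p - j)%N = false.
  apply/negbTE/negP => Hd.
  have Hj := ltn_ord j.
  have := dvdn_leq _ Hd; lia.
by rewrite expr0.
Qed.

Lemma hh_rec p : hh (p + q) = hh p * f (p + q)%N.
Proof.
rewrite /hh big_ord_recr /= subnn dvdn0 expr1; congr (_ * _).
rewrite [RHS](big_ord_widen (p + q) (fun j => f j ^+ (q %| p - j)%N)); last lia.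
rewrite [RHS]big_mkcond; apply: eq_bigr => j _.
case: (ltnP j p.+1) => Hj.
  by rewrite -addnBAC // dvdn_addl ?dvdnn.
have -> : (q %| p + q - j)%N = false.
  apply/negbTE/negP => Hd.
  have Hj2 := ltn_ord j.
  have := dvdn_leq _ Hd; lia.
by rewrite expr0.
Qed.

Lemma dd_hh p : dd (p + q) = hh p.
Proof.
elim/ltn_ind: p => p IH.
case: (ltnP p q) => Hp.
  by rewrite dd_rec dd_small // mul1r hh_small.
rewrite -(subnK Hp) dd_rec IH ?hh_rec //; lia.
Qed.

Lemma GG_rec i : GG i.+1 = GG i * hh i.+1.
Proof.
rewrite /GG /hh big_ord_recr [X in _ = _ * X]big_ord_recr /= subnn div0n dvdn0.
rewrite mulrA; congr (_ * _).
rewrite -big_split; apply: eq_bigr => j _ /=.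
rewrite -exprD; congr (_ ^+ _).
have Hj := ltn_ord j.
rewrite subSn // divnS //; lia.
Qed.

Lemma DD_small K : (K < q)%N -> DD K = 1.
Proof. move=> HK; rewrite /DD big1 // => j _; apply: dd_small; have := ltn_ord j; lia. Qed.

Lemma DD_GG i : DD (i + q) = GG i.
Proof.
elim: i => [|i IH].
  have Eq : q = q.-1.+1 by rewrite prednK.
  rewrite add0n /DD Eq big_ord_recr /= big1 ?mul1r => [|j _].
    rewrite -Eq -{1}(add0n q) dd_hh /hh /GG !big_ord1 subnn dvdn0 div0n //.
  by apply: dd_small; have := ltn_ord j; lia.
rewrite addSn /DD big_ord_recr /= -/(DD (i + q)) IH -addSn dd_hh GG_rec //.
Qed.
End Comb.
Section Band.
Variable C : comNzRingType.
Variables r q : nat.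
Variable M : nat -> nat -> C.
Hypothesis hr : (0 < r)%N.
Hypothesis hq : (0 < q)%N.
Hypothesis Hup : forall i k : nat, (i + r < k)%N -> M i k = 0.
Hypothesis Hlow : forall i k : nat, (k + q < i)%N -> M i k = 0.
Hypothesis Hdiag : forall i : nat, M i (i + r)%N = 1.

Definition AA N : 'M[C]_N := \matrix_(i < N, j < N) M i j.

Lemma row_supp N k (i l : 'I_N) : (i + k * r < l)%N -> (AA N ^+ k) i l = 0.
Proof.
elim: k l => [|k IH] l H.
  rewrite expr0 mxE; have -> : (i == l) = false by apply/negbTE; rewrite -val_eqE /=; lia.
  by rewrite mulr0n.
rewrite exprSr -mulmxE mxE big1 // => l' _.
case: (ltnP (i + k * r) l') => H'.
  by rewrite IH // mul0r.
rewrite mxE Hup ?mulr0 //; rewrite mulSnr in H; lia.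
Qed.

Lemma row_top N k (i l : 'I_N) : ((l : nat) = i + k * r)%N -> (AA N ^+ k) i l = 1.
Proof.
elim: k l => [|k IH] l H.
  rewrite mul0n addn0 in H; have -> : l = i by apply: val_inj.
  by rewrite expr0 mxE eqxx.
have Hl : (i + k * r < N)%N by have := ltn_ord l; rewrite mulSnr in H; lia.
rewrite exprSr -mulmxE mxE (bigD1 (Ordinal Hl)) //= IH // mxE.
rewrite H mulSnr addnA Hdiag mul1r big1 ?addr0 // => l' Hne.
case: (ltnP (i + k * r) l') => H'.
  by rewrite row_supp // mul0r.
rewrite mxE Hup ?mulr0 //.
have : ((l' : nat) != i + k * r)%N by move: Hne; apply: contra => /eqP E; apply/eqP/val_inj.
rewrite H mulSnr; lia.
Qed.

Lemma col_supp N k (l n : 'I_N) : (n + k * q < l)%N -> (AA N ^+ k) l n = 0.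
Proof.
elim: k l => [|k IH] l H.
  rewrite expr0 mxE; have -> : (l == n) = false by apply/negbTE; rewrite -val_eqE /=; lia.
  by rewrite mulr0n.
rewrite exprS -mulmxE mxE big1 // => l' _.
case: (ltnP (n + k * q) l') => H'.
  by rewrite IH // mulr0.
rewrite mxE Hlow ?mul0r //; rewrite mulSnr in H; lia.
Qed.

Lemma col_diag N k (l n : 'I_N) : ((l : nat) = n + k * q)%N ->
  (AA N ^+ k) l n = \prod_(t < k) M (n + t * q + q)%N (n + t * q)%N.
Proof.
elim: k l => [|k IH] l H.
  rewrite mul0n addn0 in H; have -> : l = n by apply: val_inj.
  by rewrite expr0 mxE eqxx big_ord0.
have Hl : (n + k * q < N)%N by have := ltn_ord l; rewrite mulSnr in H; lia.
rewrite exprS -mulmxE mxE (bigD1 (Ordinal Hl)) //= [X in _ + X]big1 ?addr0 => [|l' Hne].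
  by rewrite IH // mxE big_ord_recr /= mulrC H mulSnr addnA.
case: (ltnP (n + k * q) l') => H'.
  by rewrite col_supp // mulr0.
rewrite mxE Hlow ?mul0r //.
have : ((l' : nat) != n + k * q)%N by move: Hne; apply: contra => /eqP E; apply/eqP/val_inj.
rewrite H mulSnr; lia.
Qed.

Definition EE N k i j := (AA N.+1 ^+ k) (inord i) (inord j).

Lemma EE_row_supp N k i l : (i + k * r < l)%N -> (l <= N)%N -> EE N k i l = 0.
Proof. move=> H1 H2; rewrite /EE row_supp // !inordK //; lia. Qed.

Lemma EE_row_top N k i l : (l = i + k * r)%N -> (l <= N)%N -> EE N k i l = 1.
Proof. move=> H1 H2; rewrite /EE row_top // !inordK //; lia. Qed.

Lemma EE_col_supp N k l n : (n + k * q < l)%N -> (l <= N)%N -> EE N k l n = 0.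
Proof. move=> H1 H2; rewrite /EE col_supp // !inordK //; lia. Qed.

Lemma EE_col_diag N k l n : (l = n + k * q)%N -> (l <= N)%N ->
  EE N k l n = \prod_(t < k) M (n + t * q + q)%N (n + t * q)%N.
Proof. move=> H1 H2; rewrite /EE col_diag // !inordK //; lia. Qed.

Lemma EE_cmp N k i j : (i + k * r <= N)%N -> (j <= N)%N -> EE N k i j = EE N.+1 k i j.
Proof.
elim: k j => [|k IH] j Hi Hj.
  rewrite /EE !expr0 !mxE.
  have -> : (inord i == inord j :> 'I_N.+1) = (i == j) by rewrite -val_eqE /= !inordK //; lia.
  have -> : (inord i == inord j :> 'I_N.+2) = (i == j) by rewrite -val_eqE /= !inordK //; lia.
  by [].
rewrite /EE !exprSr -!mulmxE !mxE [RHS]big_ord_recr /=.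
rewrite row_supp ?mul0r ?addr0; last by rewrite inordK /=; rewrite mulSnr in Hi; lia.
apply: eq_bigr => l _.
rewrite !mxE !inordK; try lia.
have -> : widen_ord (leqnSn N.+1) l = inord l by apply: val_inj; rewrite /= inordK //; have := ltn_ord l; lia.
have E1 : (AA N.+2 ^+ k) (inord i) (inord l) = EE N.+1 k i l by [].
rewrite E1 -IH; last first.
  by have := ltn_ord l; lia.
  by rewrite mulSnr in Hi; lia.
rewrite /EE inord_val inordK //; have := ltn_ord l; lia.
Qed.

Lemma EE_cmp_le N N' k i j : (N <= N')%N -> (i + k * r <= N)%N -> (j <= N)%N ->
  EE N k i j = EE N' k i j.
Proof.
move=> /subnK <- Hi Hj; elim: (N' - N)%N => [|d IH]; first by rewrite add0n.
rewrite IH addSn EE_cmp //; lia.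
Qed.

Lemma Delta_DD K : Delta r q M K = DD q (fun l => M (l + q)%N l) K.
Proof.
pose B := ((K + K).+1 * r + q + K)%N.
have Halpha : forall i j : nat, (i <= K)%N -> (j <= K)%N ->
  alpha r q M i j = \sum_(l < K.+1) EE B (i %/ r) (i %% r) l * EE B (j %/ q) l (j %% q).
  move=> i j Hi Hj.
  have Hk1 : (i %/ r <= K)%N by apply: leq_trans (leq_div _ _) Hi.
  have Hk2 : (j %/ q <= K)%N by apply: leq_trans (leq_div _ _) Hj.
  have Hm : (i %% r < r)%N by rewrite ltn_mod.
  have Hn : (j %% q < q)%N by rewrite ltn_mod.
  have Hkr : ((i %/ r + j %/ q).+1 * r <= (K + K).+1 * r)%N.
    by apply: leq_mul => //; lia.
  have Hi' := divn_eq i r.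
  rewrite /alpha /S /=.
  have -> : Spow r q M (i %/ r + j %/ q) (i %% r) (j %% q)
     = EE ((i %/ r + j %/ q).+1 * r + q) (i %/ r + j %/ q) (i %% r) (j %% q) by [].
  rewrite (EE_cmp_le (N' := B)); first last.
  - by apply: leq_trans (ltnW Hn) (leq_addl _ _).
  - rewrite mulSnr; move: Hm; move: ((i %/ r + j %/ q) * r)%N (i %% r)%N => x y; lia.
  - move: Hkr; rewrite /B; move: ((K + K).+1 * r)%N ((i %/ r + j %/ q).+1 * r)%N => x y; lia.
  rewrite /EE exprD -mulmxE mxE.
  pose F := fun l : nat => EE B (i %/ r) (i %% r) l * EE B (j %/ q) l (j %% q).
  transitivity (\sum_(l < B.+1) F l).
    by apply: eq_bigr => l _; rewrite /F /EE inord_val.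
  rewrite (@big_ord_widen _ _ _ K.+1 B.+1 F); last by rewrite /B; lia.
  rewrite [RHS]big_mkcond /=; apply: eq_bigr => l _.
  case: ifP => // Hl.
  rewrite /F EE_row_supp ?mul0r //; last by have := ltn_ord l; lia.
  move/negbT: Hl; lia.
have HiB : forall i : 'I_K.+1, (i <= B)%N by move=> i; have := ltn_ord i; rewrite /B; lia.
rewrite /Delta.
have -> : \matrix_(i < K.+1, j < K.+1) alpha r q M i j =
   (\matrix_(i < K.+1, l < K.+1) EE B (i %/ r) (i %% r) l) *m
   (\matrix_(l < K.+1, j < K.+1) EE B (j %/ q) l (j %% q)).
  apply/matrixP => i j; rewrite !mxE Halpha; last by have := ltn_ord j; lia.
    by apply: eq_bigr => l _; rewrite !mxE.
  by have := ltn_ord i; lia.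
rewrite det_mulmx det_trig; last first.
  apply/is_trig_mxP => i l H; rewrite mxE EE_row_supp //.
  by have := divn_eq i r; lia.
rewrite big1 ?mul1r => [|i _]; last first.
  by rewrite mxE EE_row_top //; have := divn_eq i r; lia.
rewrite -det_tr det_trig; last first.
  apply/is_trig_mxP => a b H; rewrite !mxE EE_col_supp //.
  by have := divn_eq a q; lia.
rewrite /DD; apply: eq_bigr => j _.
by rewrite !mxE EE_col_diag //; have := divn_eq j q; lia.
Qed.
End Band.


Theorem lemma1 (R : rcfType) (r q : nat) (M : nat -> nat -> R[i])
    (hr : (0 < r)%N) (hq : (0 < q)%N)
    (Hup : forall i k : nat, (i + r < k)%N -> M i k = 0)
    (Hlow : forall i k : nat, (k + q < i)%N -> M i k = 0)
    (Hdiag : forall i : nat, M i (i + r)%N = 1)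
    (Hsub : forall i : nat, M (i + q)%N i != 0) :
  (forall k : nat, (k < q)%N -> Delta r q M k = 1) /\
  (forall i : nat,
     Delta r q M (i + q)%N
     = \prod_(j < i.+1) M (j + q)%N j ^+ ((i - j) %/ q).+1).
Proof.
split.
  by move=> k Hk; rewrite (Delta_DD hr hq Hup Hlow Hdiag) DD_small.
by move=> i; rewrite (Delta_DD hr hq Hup Hlow Hdiag) DD_GG.
Qed.
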